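(* Let $p(1),\dots,p(K)\in[0,1]$, let $\mathbb F_i$ be the CDF of $\mathrm{Bern}(p(i))$, and for $\alpha\in\Delta^{K-1}$ write $\mathbb F_\alpha=\sum_i\alpha(i)\mathbb F_i$. Let $h(u)=u(1-u)$. Then: (1) for all $\alpha,\beta\in\Delta^{K-1}$, $U_h(\mathbb F_\alpha)-U_h(\mathbb F_\beta)\le \|\mathbb F_\alpha-\mathbb F_\beta\|_{\mathrm W}$; (2) let $\alpha^\star\in\arg\max_{\alpha\in\Delta^{K-1}}U_h(\mathbb F_\alpha)$ and $\mathbb F^\star=\mathbb F_{\alpha^\star}$. If $\max_i p(i)<\tfrac12$ or $\min_i p(i)>\tfrac12$, then $U_h(\mathbb F^\star)-U_h(\mathbb F_\alpha)\le\|\mathbb F^\star-\mathbb F_\alpha\|_{\mathrm W}$ for all $\alpha\in\Delta^{K-1}$; otherwise (i.e., there exist $i,j$ with $p(i)\le\tfrac12\le p(j)$), $U_h(\mathbb F^\star)-U_h(\mathbb F_\alpha)\le\|\mathbb F^\star-\mathbb F_\alpha\|_{\mathrm W}^2$ for all $\alpha\in\Delta^{K-1}$.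
   Context: For a CDF $Q$ of a nonnegative random variable, $U_h(Q)=\int_0^\infty h(1-Q(x))\,dx$. $\|\cdot\|_{\mathrm W}$ is the 1-Wasserstein distance, $\|G-S\|_{\mathrm W}=\int|G(x)-S(x)|dx$ for CDFs $G,S$. $\Delta^{K-1}$ is the probability simplex in $\mathbb R^K$. *)

(* Defs.v *)
From HB Require Import structures.
From mathcomp Require Import all_boot all_order all_algebra.
From mathcomp Require Import all_classical all_reals all_analysis.
Set Implicit Arguments. Unset Strict Implicit. Unset Printing Implicit Defensive.
Import Order.TTheory GRing.Theory Num.Theory.
Local Open Scope classical_set_scope.
Local Open Scope ring_scope.

Definition bern_cdf (R : realType) (q : R) (x : R) : R :=
  if x < 0 then 0 else if x < 1 then 1 - q else 1.

Definition mix_cdf (R : realType) (K : nat) (p : 'I_K -> R) (a : 'I_K -> R)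
  (x : R) : R := \sum_(i < K) a i * bern_cdf (p i) x.

Definition in_simplex (R : realType) (K : nat) (a : 'I_K -> R) : Prop :=
  (forall i, 0 <= a i) /\ \sum_(i < K) a i = 1.

Definition Uh (R : realType) (h : R -> R) (Q : R -> R) : \bar R :=
  (\int[@lebesgue_measure R]_(x in `[0%R, +oo[) (h (1 - Q x))%:E)%E.

Definition Wdist (R : realType) (G S : R -> R) : \bar R :=
  (\int[@lebesgue_measure R]_(x in [set: R]) `|G x - S x|%:E)%E.

Definition hvar (R : realType) (u : R) : R := u * (1 - u).

(* Main.v *)
Require Import Defs.
From HB Require Import structures.
From mathcomp Require Import all_boot all_order all_algebra.
From mathcomp Require Import all_classical all_reals all_analysis.
From mathcomp Require Import ring lra measurable_realfun.
Import Order.TTheory GRing.Theory Num.Theory.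
Local Open Scope classical_set_scope.
Local Open Scope ring_scope.

Section S.
Variable R : realType.

Lemma int_step (D : set R) (mD : measurable D) (c : R) (f : R -> R) :
  `[0, 1[ `<=` D -> (forall x, D x -> f x = c * \1_(`[0, 1[ : set R) x) -> 0 <= c ->
  (\int[@lebesgue_measure R]_(x in D) (f x)%:E = c%:E)%E.
Proof.
move=> sD fE c0.
transitivity (\int[@lebesgue_measure R]_(x in D) (c%:E * (\1_(`[0, 1[ : set R) x)%:E))%E.
  by apply: eq_integral => x; rewrite inE => Dx; rewrite fE.
rewrite ge0_integralZl//; last first.
  by apply/measurable_EFinP; exact: measurable_indic.
rewrite integral_indic//.
rewrite setIidl//.
rewrite -[RHS]mule1; congr (_ * _)%E.
apply: eq_trans (lebesgue_measure_itv `[0%R, 1%R[) _.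
rewrite /=.
by rewrite lte01 oppr0 adde0.
Qed.
Variables (K : nat) (p : 'I_K -> R).
Hypothesis hp : forall i, 0 <= p i <= 1.

Definition mm (a : 'I_K -> R) := \sum_(i < K) a i * p i.

Lemma mix_eq a x : in_simplex a -> mix_cdf p a x = bern_cdf (mm a) x.
Proof.
move=> [a0 sa]; rewrite /mix_cdf /bern_cdf /mm.
case: ifP => _; first by rewrite big1 // => i _; rewrite mulr0.
case: ifP => _.
  by under eq_bigr do rewrite mulrBr mulr1; rewrite sumrB sa.
by under eq_bigr do rewrite mulr1.
Qed.

Lemma mm_range {a} : in_simplex a -> 0 <= mm a <= 1.
Proof.
move=> [a0 sa]; apply/andP; split.
  by apply: sumr_ge0 => i _; apply: mulr_ge0 => //; case/andP: (hp i).
rewrite -sa; apply: ler_sum => i _; rewrite ler_piMr //; by case/andP: (hp i).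
Qed.

Lemma Uh_eq a : in_simplex a -> Uh (@hvar R) (mix_cdf p a) = (hvar (mm a))%:E.
Proof.
move=> sa; rewrite /Uh; apply: int_step.
- exact: measurable_itv.
- by move=> x /=; rewrite !in_itv /= => /andP[-> _].
- move=> x /=; rewrite in_itv /= andbT => x0.
  rewrite mix_eq // /bern_cdf indicE mem_setE in_itv /= x0 /= ltNge x0 /=.
  case: ifP => _; first by rewrite mulr1 opprB addrC subrK.
  by rewrite mulr0 subrr /hvar mul0r.
- have /andP[h0 h1] := mm_range sa; rewrite /hvar; apply: mulr_ge0 => //.
  by rewrite subr_ge0.
Qed.

Lemma W_eq a b : in_simplex a -> in_simplex b ->
  Wdist (mix_cdf p a) (mix_cdf p b) = `|mm a - mm b|%:E.
Proof.
move=> sa sb; rewrite /Wdist; apply: int_step => //.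
move=> x _; rewrite !mix_eq // /bern_cdf indicE mem_setE in_itv /=.
case: (ltrP x 0) => x0 /=.
  by rewrite subrr normr0 mulr0.
case: ifP => _; last by rewrite subrr normr0 mulr0.
rewrite mulr1 -normrN; congr (Num.norm _); ring.
Qed.

Lemma part1 a b : in_simplex a -> in_simplex b ->
  (Uh (@hvar R) (mix_cdf p a) - Uh (@hvar R) (mix_cdf p b)
        <= Wdist (mix_cdf p a) (mix_cdf p b))%E.
Proof.
move=> sa sb; rewrite !Uh_eq // W_eq // -EFinB lee_fin /hvar.
have /andP[a0 a1] := mm_range sa; have /andP[b0 b1] := mm_range sb.
have [h|h] := lerP (mm b) (mm a).
  nra.
nra.
Qed.

Lemma sum_if (F : 'I_K -> R) i : \sum_k (if k == i then F k else 0) = F i.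
Proof. by rewrite -big_mkcond big_pred1_eq. Qed.

Lemma half_reach {i j} : p i <= 1/2 -> 1/2 <= p j ->
  exists a, in_simplex a /\ mm a = 1/2.
Proof.
move=> hi hj.
have [t [t0 t1 ht]] : exists t, [/\ 0 <= t, t <= 1 & t * p i + (1 - t) * p j = 1/2].
  have [e|ne] := eqVneq (p i) (p j).
    exists 0; split => //; rewrite mul0r add0r subr0 mul1r; lra.
  have lt : p i < p j by rewrite lt_neqAle ne /=; lra.
  have d0 : 0 < p j - p i by rewrite subr_gt0.
  pose u := (p j - 1/2) / (p j - p i).
  have hu : u * (p j - p i) = p j - 1/2 by rewrite /u divfK // gt_eqF.
  exists u; split.
  - by apply: divr_ge0; lra.
  - by rewrite /u ler_pdivrMr // mul1r; lra.
  - have -> : u * p i + (1 - u) * p j = p j - u * (p j - p i) by ring.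
    rewrite hu; lra.
exists (fun k => (if k == i then t else 0) + (if k == j then 1 - t else 0)).
split; first split.
- move=> k; apply: addr_ge0; case: ifP => //; lra.
- rewrite big_split /=.
  rewrite (sum_if (fun=> t)) (sum_if (fun=> 1 - t)); lra.
- rewrite /mm.
  under eq_bigr => k _.
    rewrite (_ : _ * p k = (if k == i then t * p k else 0)
                   + (if k == j then (1 - t) * p k else 0)); last first.
      by rewrite mulrDl; congr (_ + _); case: ifP => _; rewrite ?mul0r.
  over.
  rewrite big_split /= (sum_if (fun k => t * p k)) (sum_if (fun k => (1 - t) * p k)).
  exact: ht.
Qed.

Lemma part2b (astar : 'I_K -> R) : in_simplex astar ->
  (forall a, in_simplex a ->
        (Uh (@hvar R) (mix_cdf p a) <= Uh (@hvar R) (mix_cdf p astar))%E) ->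
  (exists i j, p i <= 1 / 2 /\ 1 / 2 <= p j) ->
  forall a, in_simplex a ->
    (Uh (@hvar R) (mix_cdf p astar) - Uh (@hvar R) (mix_cdf p a)
       <= Wdist (mix_cdf p astar) (mix_cdf p a)
          * Wdist (mix_cdf p astar) (mix_cdf p a))%E.
Proof.
move=> ss smax [i [j [hi hj]]] a sa.
have [a0 [sa0 ma0]] := half_reach (i:=i) (j:=j) hi hj.
have := smax a0 sa0; rewrite !Uh_eq // lee_fin /hvar ma0 => hle.
have hs : mm astar = 1/2.
  have h2 : (mm astar - 1/2) ^+ 2 <= 0 by rewrite expr2; nra.
  have : (mm astar - 1/2) ^+ 2 = 0 by apply/le_anti; rewrite h2 sqr_ge0.
  by move/eqP; rewrite expf_eq0 /= subr_eq0 => /eqP.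
rewrite W_eq // -EFinB -EFinM lee_fin hs -normrM ger0_norm; last first.
  by rewrite -expr2 sqr_ge0.
nra.
Qed.
End S.

Theorem mainTheorem4 (R : realType) (K : nat) (p : 'I_K -> R)
  (hp : forall i, 0 <= p i <= 1) :
  (forall a b : 'I_K -> R, in_simplex a -> in_simplex b ->
     (Uh (@hvar R) (mix_cdf p a) - Uh (@hvar R) (mix_cdf p b)
        <= Wdist (mix_cdf p a) (mix_cdf p b))%E)
  /\
  (forall astar : 'I_K -> R, in_simplex astar ->
     (forall a, in_simplex a ->
        (Uh (@hvar R) (mix_cdf p a) <= Uh (@hvar R) (mix_cdf p astar))%E) ->
     (((forall i, p i < 1 / 2) \/ (forall i, 1 / 2 < p i)) ->
        forall a, in_simplex a ->
          (Uh (@hvar R) (mix_cdf p astar) - Uh (@hvar R) (mix_cdf p a)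
             <= Wdist (mix_cdf p astar) (mix_cdf p a))%E)
     /\
     ((exists i j, p i <= 1 / 2 /\ 1 / 2 <= p j) ->
        forall a, in_simplex a ->
          (Uh (@hvar R) (mix_cdf p astar) - Uh (@hvar R) (mix_cdf p a)
             <= Wdist (mix_cdf p astar) (mix_cdf p a)
                * Wdist (mix_cdf p astar) (mix_cdf p a))%E)).
Proof.
split; first by move=> a b; exact: part1.
move=> astar ss smax; split.
  by move=> _ a sa; exact: part1.
exact: part2b.
Qed.
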